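(* Let $G$ be a finite group, $\rho':G\to \mathrm{U}(\mathcal{H})$ an irreducible unitary representation on a $d$-dimensional complex Hilbert space $\mathcal{H}$ with character $\chi$. Let $H\leq G$, let $\nu$ be an irreducible character of $H$, and let $\Pi_{1}$ be the orthogonal projection of $L^2(H)$ onto some subspace of $L^2(H)$ that is invariant and irreducible under the left regular representation of $H$ and affords the character $\nu$. Since $\Pi_1$ commutes with the left regular representation, $\Pi_1 f=f*p$ for a unique $p\in L^2(H)$; write $\Pi_1[s,1]=p(s)$ for $s\in H$. Then there exist a unique subspace $V\subseteq\mathcal{H}$ with $\dim V=\nu(1)$ and a nonzero vector $v\in V$, unique up to a scalar factor, such that $$\langle v,\rho'(s)v\rangle=\frac{\langle v,v\rangle\,|H|}{\dim V}\,\Pi_1[s,1]\quad\text{for all } s\in H$$ if and only if $$\sum_{s\in H}\chi(s)\overline{\nu(s)}=|H|.$$ In that case the group frame $\Phi=(\rho'(g)v)_{g\in G}$ is tight and its Gram matrix $G_\Phi=[\langle\rho'(g_2)v,\rho'(g_1)v\rangle]_{g_1,g_2\in G}$ satisfies $$G_\Phi=\langle v,v\rangle\,\frac{|G|}{d}\,\Pi_\chi\Pi_1',$$ where $\Pi_\chi$ and $\Pi_1'$ are the operators on $L^2(G)$ defined in the context.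
   Context: For a finite group $K$, $L^2(K)$ is the space of functions $K\to\mathbb{C}$ with convolution $(f*h)(s)=\sum_{g\in K}f(g)h(g^{-1}s)$; the left regular representation is $\rho(g)f=\delta_g*f$, where $\delta_g$ is the indicator function of $\{g\}$. Operators on $L^2(K)$ are identified with matrices indexed by $K\times K$ in the basis $(\delta_g)$; the operator $f\mapsto f*h$ has matrix entries $[s,g]=h(g^{-1}s)$. For an irreducible character $\chi$ of $G$, $\Pi_\chi f=\frac{\chi(1)}{|G|}\,\overline{\chi}*f$ is the projection of $L^2(G)$ onto its $\chi$-isotypic subspace. With $p\in L^2(H)$ as in the claim, $p'\in L^2(G)$ is defined by $p'(s)=p(s)$ if $s\in H$ and $p'(s)=0$ otherwise, and $\Pi_1'f=f*p'$ for $f\in L^2(G)$. A frame is a finite spanning sequence of vectors; it is tight if $\sum_j|\langle u,\phi_j\rangle|^2=A\|u\|^2$ for all $u$ with a constant $A>0$. The inner product is linear in the first argument. *)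

(* Defs.v *)
From HB Require Import structures.
From mathcomp Require Import all_boot all_order all_algebra.
From mathcomp Require Import all_fingroup all_solvable all_field all_character.
Set Implicit Arguments. Unset Strict Implicit. Unset Printing Implicit Defensive.
Import Order.TTheory GRing.Theory Num.Theory.
Local Open Scope ring_scope.

(* L^2 of a finite group K <= gT: functions gT -> C (only values on K matter;
   elements of L^2(K) are those supported in K). *)
Definition L2 (gT : finGroupType) := {ffun gT -> algC^o}.

Section Defs.
Variable gT : finGroupType.

Definition supp_in (K : {set gT}) (f : L2 gT) := forall s, s \notin K -> f s = 0.

Definition delta (g : gT) : L2 gT := [ffun s => (s == g)%:R].

Definition conv (K : {set gT}) (f h : L2 gT) : L2 gT :=
  [ffun s => \sum_(g in K) f g * h (g^-1 * s)%g].

Definition lreg (K : {set gT}) (g : gT) (f : L2 gT) : L2 gT := conv K (delta g) f.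

Definition ipL2 (K : {set gT}) (f h : L2 gT) : algC := \sum_(s in K) f s * (h s)^*.

Definition lreg_invariant (K : {set gT}) (W : {vspace L2 gT}) :=
  (forall f, f \in W -> supp_in K f) /\
  (forall g f, g \in K -> f \in W -> lreg K g f \in W).

Definition lreg_irreducible (K : {set gT}) (W : {vspace L2 gT}) :=
  [/\ lreg_invariant K W, W != 0%VS &
      forall U : {vspace L2 gT}, (U <= W)%VS -> lreg_invariant K U ->
        U = 0%VS \/ U = W].

Definition afforded_char (K : {set gT}) (W : {vspace L2 gT}) (g : gT) : algC :=
  \sum_(i < \dim W) coord (vbasis W) i (lreg K g (vbasis W)`_i).

Definition is_orth_proj (K : {set gT}) (W : {vspace L2 gT}) (P : L2 gT -> L2 gT) :=
  forall f, supp_in K f ->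
    P f \in W /\ (forall w, w \in W -> ipL2 K (f - P f) w = 0).

Definition ext0 (K : {set gT}) (p : L2 gT) : L2 gT :=
  [ffun s => if s \in K then p s else 0].

Definition Pi_chi (K : {set gT}) (chi : gT -> algC) (f : L2 gT) : L2 gT :=
  (chi 1%g / #|K|%:R) *: conv K [ffun s => (chi s)^*] f.

Definition Pi1' (G H : {set gT}) (p f : L2 gT) : L2 gT := conv G f (ext0 H p).

(* matrix entry [s, g] of an operator T : (T delta_g)(s) *)
Definition op_entry (T : L2 gT -> L2 gT) (s g : gT) : algC := T (delta g) s.

End Defs.

(* The Hilbert space C^d, as column vectors; rho'(g) v := rG g *m v. *)
Definition ipC (d : nat) (u w : 'cV[algC]_d) : algC :=
  \sum_(i < d) u i 0 * (w i 0)^*.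

Definition unitary_repr (gT : finGroupType) (G : {group gT}) (d : nat)
  (rG : mx_representation algC G d) :=
  forall g, g \in G -> forall u w : 'cV[algC]_d,
    ipC (rG g *m u) (rG g *m w) = ipC u w.

Definition tight_frame (I : finType) (J : {set I}) (d : nat)
  (phi : I -> 'cV[algC]_d) :=
  (forall u : 'cV[algC]_d, exists c : I -> algC, u = \sum_(j in J) c j *: phi j) /\
  exists A : algC, 0 < A /\
    forall u : 'cV[algC]_d, \sum_(j in J) `|ipC u (phi j)| ^+ 2 = A * ipC u u.

(* Main.v *)
Require Import Defs.
From HB Require Import structures.
From mathcomp Require Import all_boot all_order all_algebra.
From mathcomp Require Import all_fingroup all_solvable all_field all_character.
Set Implicit Arguments. Unset Strict Implicit. Unset Printing Implicit Defensive.
Import Order.TTheory GRing.Theory Num.Theory.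
Local Open Scope ring_scope.


Lemma trace_trick (vT : vectType algC) (U : {vspace vT}) (I : finType)
  (e : I -> vT) (phi : I -> vT -> algC) (A : vT -> vT) :
  (forall x, x = \sum_i phi i x *: e i) ->
  (forall i x y, phi i (x + y) = phi i x + phi i y) ->
  (forall i a x, phi i (a *: x) = a * phi i x) ->
  (forall x y, A (x + y) = A x + A y) ->
  (forall a x, A (a *: x) = a *: A x) ->
  (forall x, A x \in U) ->
  \sum_i phi i (A (e i)) =
  \sum_(k < \dim U) coord (vbasis U) k (A (vbasis U)`_k).
Proof.
move=> eE phiD phiZ AD AZ AU.
have phi0 i : phi i 0 = 0 by rewrite -(scale0r (0:vT)) phiZ mul0r.
have A0 : A 0 = 0 by rewrite -{1}(scale0r (0:vT)) AZ scale0r.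
have phiS i (J : finType) (F : J -> vT) : phi i (\sum_j F j) = \sum_j phi i (F j).
  exact: (big_morph (phi i) (phiD i) (phi0 i)).
have AS (J : finType) (F : J -> vT) : A (\sum_j F j) = \sum_j A (F j).
  exact: (big_morph A AD A0).
transitivity (\sum_i \sum_(k < \dim U)
   coord (vbasis U) k (A (e i)) * phi i (vbasis U)`_k).
  apply: eq_bigr => i _; rewrite {1}(coord_vbasis (AU (e i))) phiS.
  by apply: eq_bigr => k _; rewrite phiZ.
rewrite exchange_big /=; apply: eq_bigr => k _.
rewrite {2}(eE (vbasis U)`_k) AS linear_sum; apply: eq_bigr => i _.
by rewrite AZ linearZ /= mulrC.
Qed.

Lemma scaleCE (a b : algC^o) : a *: b = a * b.
Proof. by []. Qed.

Section L2Facts.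
Variable gT : finGroupType.
Implicit Types (K : {group gT}) (f h : L2 gT).

Lemma sumKl K x (F : gT -> algC) : x \in K ->
  \sum_(s in K) F s = \sum_(s in K) F (x * s)%g.
Proof.
move=> Kx; rewrite (reindex_inj (mulgI x)) /=.
by apply: eq_bigl => s; rewrite groupMl.
Qed.

Lemma sumKr K x (F : gT -> algC) : x \in K ->
  \sum_(s in K) F s = \sum_(s in K) F (s * x)%g.
Proof.
move=> Kx; rewrite (reindex_inj (mulIg x)) /=.
by apply: eq_bigl => s; rewrite groupMr.
Qed.

Lemma sumKV K (F : gT -> algC) :
  \sum_(s in K) F s = \sum_(s in K) F (s^-1)%g.
Proof.
rewrite (reindex_inj invg_inj) /=.
by apply: eq_bigl => s; rewrite groupV.
Qed.

Lemma lregE K g f s : g \in K -> lreg K g f s = f (g^-1 * s)%g.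
Proof.
move=> Kg; rewrite ffunE (bigD1 g) //= ffunE eqxx mul1r big1 ?addr0 //.
by move=> a /andP[_ ne]; rewrite ffunE (negbTE ne) mul0r.
Qed.

Lemma convE K f h s : conv K f h s = \sum_(g in K) f g * h (g^-1 * s)%g.
Proof. by rewrite ffunE. Qed.

Lemma ipL2_lreg K x f h : x \in K ->
  ipL2 K (lreg K x f) h = ipL2 K f (lreg K x^-1 h).
Proof.
move=> Kx; rewrite /ipL2 (sumKl _ Kx); apply: eq_bigr => s Ks.
by rewrite !lregE ?groupV // mulKg invgK.
Qed.

Lemma ipL2B K f1 f2 h : ipL2 K (f1 - f2) h = ipL2 K f1 h - ipL2 K f2 h.
Proof.
by rewrite /ipL2 -sumrB; apply: eq_bigr => s _; rewrite !ffunE mulrBl.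
Qed.

Lemma ipL2C K f h : ipL2 K f h = (ipL2 K h f)^*.
Proof.
by rewrite /ipL2 rmorph_sum; apply: eq_bigr => s _; rewrite rmorphM /= conjCK mulrC.
Qed.

Lemma ipL2_delta1 K h : ipL2 K (delta 1%g) h = (h 1%g)^*.
Proof.
rewrite /ipL2 (bigD1 1%g) ?group1 //= ffunE eqxx mul1r big1 ?addr0 //.
by move=> s /andP[_ ne]; rewrite ffunE (negbTE ne) mul0r.
Qed.

Lemma ffun_delta f : f = \sum_x f x *: delta x.
Proof.
apply/ffunP=> x; rewrite sum_ffunE (bigD1 x) //= !ffunE eqxx [_ *: _]mulr1 big1 ?addr0 //.
by move=> y ne; rewrite !ffunE eq_sym (negbTE ne) [_ *: _]mulr0.
Qed.


Lemma lregD K g f1 f2 : lreg K g (f1 + f2) = lreg K g f1 + lreg K g f2.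
Proof.
by apply/ffunP=> s; rewrite !ffunE -big_split; apply: eq_bigr => a _; rewrite !ffunE mulrDr.
Qed.

Lemma lregZ K g a f : lreg K g (a *: f) = a *: lreg K g f.
Proof.
apply/ffunP=> s; rewrite !ffunE scaleCE mulr_sumr; apply: eq_bigr => b _.
by rewrite !ffunE !scaleCE mulrCA.
Qed.

Lemma convD K f1 f2 h : conv K (f1 + f2) h = conv K f1 h + conv K f2 h.
Proof.
by apply/ffunP=> s; rewrite !ffunE -big_split; apply: eq_bigr => a _; rewrite !ffunE mulrDl.
Qed.

Lemma convZ K a f h : conv K (a *: f) h = a *: conv K f h.
Proof.
apply/ffunP=> s; rewrite !ffunE scaleCE mulr_sumr; apply: eq_bigr => b _.
by rewrite !ffunE !scaleCE mulrA.
Qed.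

Lemma sumKJ K x (F : gT -> algC) : x \in K ->
  \sum_(s in K) F s = \sum_(s in K) F (s ^ x)%g.
Proof.
move=> Kx; rewrite (reindex_inj (conjg_inj x)) /=.
by apply: eq_bigl => s; rewrite groupJr.
Qed.

End L2Facts.

Section Proj.
Variables (gT : finGroupType) (H : {group gT}) (W : {vspace L2 gT})
  (Pi1 : L2 gT -> L2 gT).
Hypotheses (Winv : lreg_invariant H W) (Pproj : is_orth_proj H W Pi1).
Let p := Pi1 (delta 1%g).

Lemma supp_delta1 : supp_in H (delta 1%g).
Proof. by move=> s sH; rewrite ffunE; case: eqP => // s1; rewrite s1 group1 in sH. Qed.

Lemma pW : p \in W.
Proof. exact: (Pproj supp_delta1).1. Qed.

Lemma W_supp w s : w \in W -> s \notin H -> w s = 0.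
Proof. by move=> Ww; apply: Winv.1. Qed.

Lemma p_out s : s \notin H -> p s = 0.
Proof. exact/W_supp/pW. Qed.

Lemma lregW g w : g \in H -> w \in W -> lreg H g w \in W.
Proof. exact: Winv.2. Qed.

Lemma K1 w : w \in W -> ipL2 H p w = (w 1%g)^*.
Proof.
move=> Ww; have := (Pproj supp_delta1).2 w Ww.
by rewrite ipL2B ipL2_delta1 => /eqP; rewrite subr_eq0 => /eqP <-.
Qed.

Lemma p_herm s : s \in H -> p (s^-1)%g = (p s)^*.
Proof.
move=> Hs.
have e1 := K1 (lregW Hs pW); rewrite lregE // mulg1 in e1.
have e2 := K1 (lregW (groupVr Hs) pW); rewrite lregE ?groupV // invgK mulg1 in e2.
have := ipL2_lreg p p (groupVr Hs); rewrite invgK ipL2C e2 conjCK e1 => ->.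
by rewrite conjCK.
Qed.

Lemma conv_pW w : w \in W -> conv H w p = w.
Proof.
move=> Ww; apply/ffunP=> x; rewrite convE.
case: (boolP (x \in H)) => Hx; last first.
  rewrite W_supp // big1 // => g Hg; rewrite p_out ?mulr0 //.
  by rewrite groupMl ?groupV.
transitivity (ipL2 H w (lreg H x p)).
  apply: eq_bigr => g Hg; rewrite lregE // -p_herm ?groupM ?groupV //.
  by rewrite invMg invgK.
rewrite ipL2C ipL2_lreg // K1 ?lregW ?groupV //.
by rewrite conjCK lregE ?groupV // invgK mulg1.
Qed.

Lemma pp : conv H p p = p.
Proof. exact: conv_pW pW. Qed.

Lemma convQ f : conv H f p = \sum_(a in H) f a *: lreg H a p.
Proof.
apply/ffunP=> x; rewrite sum_ffunE convE; apply: eq_bigr => a Ha.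
by rewrite [RHS]ffunE lregE.
Qed.

Lemma convQW f : conv H f p \in W.
Proof.
by rewrite convQ; apply: memv_suml => a Ha; apply/memvZ/lregW/pW.
Qed.


Lemma vbasis_memW k : (vbasis W)`_k \in W.
Proof.
case: (ltnP k (\dim W)) => kW; first by apply: vbasis_mem; rewrite mem_nth ?size_tuple.
by rewrite nth_default ?size_tuple // mem0v.
Qed.

Lemma nuE g : g \in H ->
  afforded_char H W g = \sum_(x in H) p (x^-1 * g^-1 * x)%g.
Proof.
move=> Hg; rewrite /afforded_char.
transitivity (\sum_(k < \dim W) coord (vbasis W) k
                (lreg H g (conv H (vbasis W)`_k p))).
  by apply: eq_bigr => k _; rewrite conv_pW ?vbasis_memW.
rewrite -(@trace_trick _ W gT (@delta gT) (fun x f => f x)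
            (fun f => lreg H g (conv H f p))); first last.
- by move=> f; apply/lregW/convQW.
- by move=> a f; rewrite convZ lregZ.
- by move=> f1 f2; rewrite convD lregD.
- by move=> x a f; rewrite ffunE.
- by move=> x f1 f2; rewrite ffunE.
- by move=> f; rewrite -ffun_delta.
rewrite (eq_bigr (fun x => \sum_(a in H) delta x a * p (a^-1 * (g^-1 * x))%g));
  last by move=> x _; rewrite lregE // convE.
rewrite exchange_big /=; apply: eq_bigr => a Ha.
rewrite (bigD1 a) //= ffunE eqxx mul1r big1 ?addr0 ?mulgA //.
by move=> x ne; rewrite ffunE eq_sym (negbTE ne) mul0r.
Qed.

Lemma nu1 : afforded_char H W 1%g = (\dim W)%:R.
Proof.
rewrite /afforded_char; transitivity (\sum_(k < \dim W) (1 : algC)); last by rewrite sumr_const card_ord.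
apply: eq_bigr => k _.
have -> : lreg H 1 (vbasis W)`_k = (vbasis W)`_k.
  by apply/ffunP=> s; rewrite lregE // invg1 mul1g.
by rewrite coord_free ?eqxx // (basis_free (vbasisP W)).
Qed.

Lemma nu1p : afforded_char H W 1%g = #|H|%:R * p 1%g.
Proof.
rewrite nuE // mulr_natl -sumr_const; apply: eq_bigr => x _.
by rewrite invg1 mulg1 mulVg.
Qed.

Lemma chi_nu (G : {group gT}) (chi : 'CF(G)) : H \subset G ->
  \sum_(s in H) chi s * (afforded_char H W s)^* =
  #|H|%:R * \sum_(s in H) chi s * p s.
Proof.
move=> HG.
transitivity (\sum_(x in H) \sum_(s in H) chi s * p (s ^ x)%g).
  rewrite exchange_big /=; apply: eq_bigr => s Hs.
  rewrite nuE // rmorph_sum mulr_sumr; apply: eq_bigr => x Hx.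
  rewrite /= -p_herm ?groupM ?groupV // !invMg !invgK mulgA.
  by rewrite conjgE mulgA.
rewrite mulr_natl -sumr_const; apply: eq_bigr => x Hx.
rewrite (sumKJ _ (groupVr Hx)); apply: eq_bigr => s Hs.
by rewrite conjgKV cfunJ // (subsetP HG) ?groupV.
Qed.

End Proj.


Lemma mk_lin (vT rT : vectType algC) (F : vT -> rT) : linear F ->
  exists L : 'Hom(vT, rT), forall x, L x = F x.
Proof.
move=> linF; pose flM := GRing.isLinear.Build _ _ _ _ F linF.
pose fL : {linear _ -> _} := HB.pack F flM.
by exists (linfun fL) => x; rewrite lfunE.
Qed.

Lemma vbasis_mem_nth (vT : vectType algC) (W : {vspace vT}) k : (vbasis W)`_k \in W.
Proof.
case: (ltnP k (\dim W)) => kW; first by apply: vbasis_mem; rewrite mem_nth ?size_tuple.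
by rewrite nth_default ?size_tuple // mem0v.
Qed.

Section Schur.
Variable gT : finGroupType.
Implicit Types (K : {group gT}) (f h : L2 gT).

Lemma lregB K g f1 f2 : lreg K g (f1 - f2) = lreg K g f1 - lreg K g f2.
Proof.
by apply/ffunP=> s; rewrite !ffunE -sumrB; apply: eq_bigr => a _; rewrite !ffunE mulrBr.
Qed.

Lemma conv_lreg K g f h : g \in K -> conv K (lreg K g f) h = lreg K g (conv K f h).
Proof.
move=> Kg; apply/ffunP=> s; rewrite lregE // !convE (sumKl _ Kg).
by apply: eq_bigr => a Ka; rewrite lregE // mulKg invMg mulgA.
Qed.

Lemma conv_sum K (I : finType) (F : I -> L2 gT) h :
  conv K (\sum_i F i) h = \sum_i conv K (F i) h.
Proof.
apply: (big_morph (fun x => conv K x h)) => [x y|]; first exact: convD.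
by apply/ffunP=> s; rewrite !ffunE big1 // => a _; rewrite ffunE mul0r.
Qed.

Lemma schur K (W : {vspace L2 gT}) f : lreg_irreducible K W ->
  (forall w, w \in W -> conv K w f \in W) ->
  exists lam, forall w, w \in W -> conv K w f = lam *: w.
Proof.
case=> Winv W0 Wmin RW.
set n := \dim W; have n_gt0 : (0 < n)%N by rewrite lt0n dimv_eq0.
pose b := vbasis W.
pose M : 'M[algC]_n := \matrix_(j, i) coord b i (conv K b`_j f).
have [lam] : exists lam, eigenvalue M lam.
  have : size (char_poly M) != 1%N by rewrite size_char_poly eqSS -lt0n.
  by case/closed_rootP => lam; rewrite -eigenvalue_root_char => ?; exists lam.
case/eigenvalueP => u uM u0.
pose w := \sum_j u 0 j *: b`_j.
have Ww : w \in W by apply: memv_suml => j _; apply/memvZ/vbasis_mem_nth.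
have w0 : w != 0.
  apply/eqP => w0; move/eqP: u0; apply; apply/rowP => j; rewrite mxE.
  by move/freeP: (basis_free (vbasisP W)) => /(_ (fun j => u 0 j) w0 j).
have Rw : conv K w f = lam *: w.
  rewrite conv_sum.
  transitivity (\sum_j \sum_i (u 0 j * M j i) *: b`_i).
    apply: eq_bigr => j _; rewrite convZ (coord_vbasis (RW _ (vbasis_mem_nth W j))).
    by rewrite scaler_sumr; apply: eq_bigr => i _; rewrite mxE scalerA.
  rewrite exchange_big /= scaler_sumr; apply: eq_bigr => i _.
  rewrite -scaler_suml scalerA; congr (_ *: _).
  by have := congr1 (fun m : 'rV_n => m 0 i) uM; rewrite !mxE => <-.
have linL : linear (fun x => conv K x f - lam *: x).
  move=> a x y /=; rewrite convD convZ scalerDr scalerBr !scalerA [lam * a]mulrC.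
  by rewrite opprD addrACA.
have [L LE] := mk_lin linL.
set U := (W :&: lker L)%VS.
have UW : (U <= W)%VS by apply: capvSl.
have Uinv : lreg_invariant K U.
  split=> [x /memv_capP[Wx _]|g x Kg /memv_capP[Wx]]; first exact: Winv.1.
  rewrite memv_ker LE => /eqP Lx; apply/memv_capP; split; first exact: Winv.2.
  by rewrite memv_ker LE conv_lreg // -lregZ -lregB Lx -{1}(scale0r (0 : L2 gT)) lregZ scale0r.
case: (Wmin U UW Uinv) => [U0|UWe].
  have : w \in U by rewrite /U memv_cap Ww memv_ker LE Rw subrr eqxx.
  by rewrite U0 memv0 (negbTE w0).
exists lam => x Wx; have : x \in U by rewrite UWe.
by rewrite /U memv_cap memv_ker LE subr_eq0 => /andP[_ /eqP].
Qed.

End Schur.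


Section IpC.
Variable d : nat.
Implicit Types (u w x : 'cV[algC]_d).

Lemma ipCDl u w x : ipC (u + w) x = ipC u x + ipC w x.
Proof. by rewrite /ipC -big_split; apply: eq_bigr => i _; rewrite mxE mulrDl. Qed.
Lemma ipCZl a u x : ipC (a *: u) x = a * ipC u x.
Proof. by rewrite /ipC mulr_sumr; apply: eq_bigr => i _; rewrite mxE mulrA. Qed.
Lemma ipCDr u w x : ipC x (u + w) = ipC x u + ipC x w.
Proof. by rewrite /ipC -big_split; apply: eq_bigr => i _; rewrite mxE rmorphD mulrDr. Qed.
Lemma ipCZr a u x : ipC x (a *: u) = a^* * ipC x u.
Proof. by rewrite /ipC mulr_sumr; apply: eq_bigr => i _; rewrite mxE rmorphM mulrCA. Qed.
Lemma ipCNl u x : ipC (- u) x = - ipC u x.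
Proof. by rewrite -scaleN1r ipCZl mulN1r. Qed.
Lemma ipCNr u x : ipC x (- u) = - ipC x u.
Proof. by rewrite -scaleN1r ipCZr rmorphN1 mulN1r. Qed.
Lemma ipCBl u w x : ipC (u - w) x = ipC u x - ipC w x.
Proof. by rewrite ipCDl ipCNl. Qed.
Lemma ipCBr u w x : ipC x (u - w) = ipC x u - ipC x w.
Proof. by rewrite ipCDr ipCNr. Qed.
Lemma ipC0l x : ipC 0 x = 0.
Proof. by rewrite /ipC big1 // => i _; rewrite mxE mul0r. Qed.
Lemma ipC0r x : ipC x 0 = 0.
Proof. by rewrite /ipC big1 // => i _; rewrite mxE rmorph0 mulr0. Qed.
Lemma ipC_suml (I : finType) (P : pred I) (F : I -> 'cV[algC]_d) x :
  ipC (\sum_(i | P i) F i) x = \sum_(i | P i) ipC (F i) x.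
Proof. exact: (big_morph (fun y => ipC y x) (fun u w => ipCDl u w x) (ipC0l x)). Qed.
Lemma ipC_sumr (I : finType) (P : pred I) (F : I -> 'cV[algC]_d) x :
  ipC x (\sum_(i | P i) F i) = \sum_(i | P i) ipC x (F i).
Proof. exact: (big_morph (fun y => ipC x y) (fun u w => ipCDr u w x) (ipC0r x)). Qed.
Lemma ipCC u w : ipC u w = (ipC w u)^*.
Proof. by rewrite /ipC rmorph_sum; apply: eq_bigr => i _; rewrite rmorphM /= conjCK mulrC. Qed.
Lemma ipC_ge0 u : 0 <= ipC u u.
Proof. by apply: sumr_ge0 => i _; apply: mul_conjC_ge0. Qed.
Lemma ipC_real u : (ipC u u)^* = ipC u u.
Proof. by rewrite -ipCC. Qed.
Lemma ipC_eq0 u : ipC u u = 0 -> u = 0.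
Proof.
move/eqP; rewrite psumr_eq0 => [/allP h|i _]; last exact: mul_conjC_ge0.
apply/colP => i; rewrite mxE; apply/eqP; rewrite -mul_conjC_eq0.
by apply: h; rewrite mem_index_enum.
Qed.
Lemma ipC_neq0 u : u != 0 -> ipC u u != 0.
Proof. by apply: contra => /eqP/ipC_eq0 ->. Qed.
End IpC.

Section Matrix.
Variables (gT : finGroupType) (G H : {group gT}) (d : nat)
  (rG : mx_representation algC G d).
Hypotheses (rGu : unitary_repr rG) (HG : H \subset G).
Variable p : L2 gT.
Hypotheses (p_outH : forall s, s \notin H -> p s = 0)
  (p_hermH : forall s, s \in H -> p (s^-1)%g = (p s)^*)
  (ppH : conv H p p = p).

Lemma sumKlM (R : nmodType) (K : {group gT}) x (F : gT -> R) : x \in K ->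
  \sum_(s in K) F s = \sum_(s in K) F (x * s)%g.
Proof.
move=> Kx; rewrite (reindex_inj (mulgI x)) /=.
by apply: eq_bigl => s; rewrite groupMl.
Qed.

Lemma sumKVM (R : nmodType) (K : {group gT}) (F : gT -> R) :
  \sum_(s in K) F s = \sum_(s in K) F (s^-1)%g.
Proof.
rewrite (reindex_inj invg_inj) /=.
by apply: eq_bigl => s; rewrite groupV.
Qed.

Lemma ipC_rG g u w : g \in G -> ipC (rG g *m u) w = ipC u (rG (g^-1)%g *m w).
Proof.
move=> Gg; have e : rG g *m (rG (g^-1)%g *m w) = w.
  by rewrite mulmxA -repr_mxM ?groupV // mulgV repr_mx1 mul1mx.
by rewrite -{1}e rGu // groupV.
Qed.

Lemma ipC_rG2 g u w : g \in G -> ipC (rG g *m u) (rG g *m w) = ipC u w.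
Proof. by move=> Gg; rewrite rGu. Qed.

Definition Emx : 'M[algC]_d := \sum_(s in H) (p s : algC) *: rG s.

Lemma Emx_mul (v : 'cV[algC]_d) : Emx *m v = \sum_(s in H) (p s : algC) *: (rG s *m v).
Proof. by rewrite mulmx_suml; apply: eq_bigr => s _; rewrite scalemxAl. Qed.

Lemma HGs s : s \in H -> s \in G.
Proof. exact: (subsetP HG). Qed.

Lemma Emx_idem : Emx *m Emx = Emx.
Proof.
rewrite {1}/Emx mulmx_suml.
transitivity (\sum_(a in H) \sum_(s in H) (p a * p (a^-1 * s)%g) *: rG s).
  apply: eq_bigr => a Ha; rewrite -scalemxAl /Emx mulmx_sumr scaler_sumr.
  rewrite (sumKlM _ (groupVr Ha)); apply: eq_bigr => s Hs.
  rewrite -scalemxAr scalerA -repr_mxM ?HGs ?groupM ?groupV //.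
  by rewrite mulKVg.
rewrite exchange_big /=; apply: eq_bigr => s Hs.
by rewrite -scaler_suml -convE ppH.
Qed.

Lemma Emx_adj u w : ipC (Emx *m u) w = ipC u (Emx *m w).
Proof.
rewrite !Emx_mul ipC_suml ipC_sumr (@sumKVM _ H); apply: eq_bigr => s Hs.
rewrite ipCZl ipCZr ipC_rG ?HGs ?groupV //.
rewrite [X in rG X]invgK; congr (_ * _); exact: p_hermH.
Qed.

Lemma trEmx : \tr Emx = \sum_(s in H) p s * cfRepr rG s.
Proof.
rewrite /Emx linear_sum; apply: eq_bigr => s Hs.
by rewrite linearZ /= cfunE HGs // mulr1n.
Qed.

End Matrix.


Lemma conv_assoc (gT : finGroupType) (K : {group gT}) (f g h : L2 gT) :
  conv K (conv K f g) h = conv K f (conv K g h).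
Proof.
apply/ffunP=> s; rewrite !convE.
under eq_bigr => c _ do rewrite convE mulr_suml.
rewrite exchange_big /=; apply: eq_bigr => a Ka.
rewrite convE mulr_sumr (sumKlM _ Ka); apply: eq_bigr => b Kb.
by rewrite mulKg invMg mulgA mulrA.
Qed.

Section Main.
Variables (gT : finGroupType) (G H : {group gT}) (d : nat)
  (rG : mx_representation algC G d).
Hypotheses (rG_irr : mx_irreducible rG) (rGu : unitary_repr rG)
  (HG : H \subset G).
Variables (W : {vspace L2 gT}) (Pi1 : L2 gT -> L2 gT).
Hypotheses (W_irr : lreg_irreducible H W) (Pproj : is_orth_proj H W Pi1).

Local Notation p := (Pi1 (delta 1%g)).
Local Notation E := (Emx H rG p).

Let Winv : lreg_invariant H W.
Proof. by case: W_irr. Qed.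

Let HGs s : s \in H -> s \in G.
Proof. exact: (subsetP HG). Qed.

Let p_outH s : s \notin H -> p s = 0.
Proof. move=> sH; have := p_out Winv Pproj sH. done. Qed.
Let p_hermH s : s \in H -> p (s^-1)%g = (p s)^*.
Proof. move=> sH; have := p_herm Winv Pproj sH. done. Qed.
Let ppH : conv H p p = p.
Proof. have := pp Winv Pproj. done. Qed.

Lemma E_idem : E *m E = E.
Proof. have := Emx_idem rG HG ppH. done. Qed.
Lemma E_adj u w : ipC (E *m u) w = ipC u (E *m w).
Proof. have := Emx_adj rGu HG p_hermH u w. done. Qed.

Lemma p1_real : (p 1%g)^* = p 1%g.
Proof. by rewrite -p_hermH ?invg1. Qed.

Lemma p1E : #|H|%:R * p 1%g = (\dim W)%:R.
Proof. by rewrite -(nu1p Winv Pproj) (nu1 H W). Qed.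

Lemma p1_neq0 : p 1%g != 0.
Proof.
apply/eqP => p10; have := p1E; rewrite p10 mulr0 => /esym/eqP.
rewrite pnatr_eq0 dimv_eq0; by case: W_irr => _ /negbTE ->.
Qed.

Definition Ulin := linfun (mulmx E : 'cV[algC]_d -> 'cV[algC]_d).
Definition U := limg Ulin.

Lemma memU x : (x \in U) = (E *m x == x).
Proof.
apply/idP/eqP => [/memv_imgP[y _ ->]|Ex].
  by rewrite lfunE /= mulmxA E_idem.
by rewrite -Ex; have := memv_img Ulin (memvf x); rewrite lfunE.
Qed.

Lemma trE_dim : \tr E = (\dim U)%:R.
Proof.
have h1 (x : 'cV[algC]_d) : x = \sum_i x i 0 *: delta_mx i 0.
  rewrite {1}(matrix_sum_delta x); apply: eq_bigr => i _.
  by rewrite big_ord1.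
have h2 (i : 'I_d) (x y : 'cV[algC]_d) : (x + y) i 0 = x i 0 + y i 0 by rewrite mxE.
have h3 (i : 'I_d) a (x : 'cV[algC]_d) : (a *: x) i 0 = a * x i 0 by rewrite mxE.
have h4 (x y : 'cV[algC]_d) : E *m (x + y) = E *m x + E *m y by rewrite mulmxDr.
have h5 a (x : 'cV[algC]_d) : E *m (a *: x) = a *: (E *m x) by rewrite scalemxAr.
have h6 (x : 'cV[algC]_d) : E *m x \in U by rewrite memU mulmxA E_idem.
have tt := trace_trick h1 h2 h3 h4 h5 h6.
have e1 : \tr E = \sum_(i < d) (E *m delta_mx i (0 : 'I_1)) i 0.
  by rewrite /mxtrace; apply: eq_bigr => i _; rewrite -colE mxE.
rewrite e1; move: tt => /= ->.
transitivity (\sum_(k < \dim U) (1 : algC)); last by rewrite sumr_const card_ord.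
apply: eq_bigr => k _.
have : (vbasis U)`_k \in U by apply: vbasis_mem_nth.
rewrite memU => /eqP ->.
by rewrite coord_free ?eqxx // (basis_free (vbasisP U)).
Qed.

Lemma coef_fw v :
  (forall s, s \in H -> ipC v (rG s *m v) = ipC v v / p 1%g * p s) ->
  E *m v = v.
Proof.
move=> hv; set k := ipC v v / p 1%g.
have kr : k^* = k by rewrite /k rmorphM /= fmorphV /= ipC_real p1_real.
have h1 : ipC (E *m v) v = ipC v v.
  rewrite Emx_mul ipC_suml.
  transitivity (\sum_(s in H) k * (p s * p (s^-1)%g)).
    apply: eq_bigr => s Hs; rewrite ipCZl ipCC hv // rmorphM /= kr p_hermH //.
    by rewrite mulrCA.
  rewrite -mulr_sumr.
  have := congr1 (fun g : L2 gT => g 1%g) ppH; rewrite convE /= => e.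
  rewrite (eq_bigr (fun s => p s * p (s^-1 * 1)%g)); last by move=> s _; rewrite mulg1.
  by rewrite e /k mulfVK // p1_neq0.
have h2 : ipC v (E *m v) = ipC v v by rewrite ipCC h1 ipC_real.
have h3 : ipC (E *m v) (E *m v) = ipC v v by rewrite E_adj mulmxA E_idem h2.
apply/eqP; rewrite -subr_eq0; apply/eqP/ipC_eq0.
by rewrite ipCBl !ipCBr h1 h2 h3 !subrr.
Qed.

Lemma coef_bw v : E *m v = v ->
  forall s, s \in H -> ipC v (rG s *m v) = ipC v v / p 1%g * p s.
Proof.
move=> Ev.
pose f : L2 gT := [ffun s => if s \in H then ipC v (rG s *m v) else 0].
have fl : conv H p f = f.
  apply/ffunP => s; rewrite convE ffunE.
  case: ifP => Hs.
    rewrite -{1}Ev Emx_mul ipC_suml; apply: eq_bigr => a Ha.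
    rewrite ffunE groupMl ?groupV // Hs ipCZl; congr (_ * _).
    rewrite -(rGu (HGs Ha)) mulmxA -repr_mxM ?HGs ?groupM ?groupV //.
    by rewrite mulKVg.
  by rewrite big1 // => a Ha; rewrite ffunE groupMl ?groupV // Hs mulr0.
have fr : conv H f p = f.
  apply/ffunP => s; rewrite convE ffunE; case: ifP => Hs; last first.
    by rewrite big1 // => a Ha; rewrite p_outH ?mulr0 // groupMl ?groupV // Hs.
  rewrite -[X in rG s *m X]Ev Emx_mul mulmx_sumr ipC_sumr (sumKlM _ Hs).
  apply: eq_bigr => b Hb.
  rewrite -scalemxAr ipCZr mulmxA -repr_mxM ?HGs // ffunE groupM //.
  by rewrite invMg mulgKV p_hermH // mulrC.
have RW w : w \in W -> conv H w f \in W.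
  by move=> Ww; rewrite -fr -conv_assoc; have := convQW Winv Pproj (conv H w f).
have [lam hlam] := schur W_irr RW.
have fp : f = lam *: p.
  by rewrite -fl hlam //; have := pW Pproj.
have f1 : f 1%g = ipC v v by rewrite ffunE group1 repr_mx1 mul1mx.
have lamE : lam = ipC v v / p 1%g.
  by rewrite -f1 fp ffunE scaleCE mulfK // p1_neq0.
move=> s Hs; have := congr1 (fun g : L2 gT => g s) fp.
by rewrite !ffunE Hs => ->; rewrite scaleCE lamE.
Qed.

Lemma construct u : E *m u = u -> u != 0 ->
  exists Vu : {vspace 'cV[algC]_d},
  [/\ (forall s w, s \in H -> w \in Vu -> rG s *m w \in Vu),
      \dim Vu = \dim W, u \in Vu &
      forall V' : {vspace 'cV[algC]_d},
        (forall s w, s \in H -> w \in V' -> rG s *m w \in V') ->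
        u \in V' -> (Vu <= V')%VS].
Proof.
move=> Eu u0.
pose F (f : L2 gT) : 'cV[algC]_d := \sum_(s in H) (f s : algC) *: (rG s *m u).
have linF : linear F.
  move=> a f g; rewrite /F scaler_sumr -big_split; apply: eq_bigr => s _.
  by rewrite !ffunE scaleCE scalerDl scalerA.
have [L LE] := mk_lin linF.
have Lreg g w : g \in H -> L (lreg H g w) = rG g *m L w.
  move=> Hg; rewrite !LE /F mulmx_sumr (sumKlM _ Hg); apply: eq_bigr => a Ha.
  by rewrite lregE // mulKg -scalemxAr mulmxA -repr_mxM ?HGs.
have Lp : L p = u by rewrite LE /F -Emx_mul Eu.
exists (L @: W)%VS; split.
- move=> s x Hs /memv_imgP[w Ww ->]; rewrite -Lreg //.
  by apply: memv_img; apply: Winv.2.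
- have := limg_ker_dim L W.
  suff -> : (W :&: lker L)%VS = 0%VS by rewrite dimv0.
  case: W_irr => _ _ Wmin.
  have Uinv : lreg_invariant H (W :&: lker L)%VS.
    split=> [x /memv_capP[Wx _]|g x Hg /memv_capP[Wx]]; first exact: Winv.1.
    rewrite memv_ker => /eqP Lx; apply/memv_capP; split; first exact: Winv.2.
    by rewrite memv_ker Lreg // Lx mulmx0.
  case: (Wmin _ (capvSl _ _) Uinv) => [//|e].
  have : p \in (W :&: lker L)%VS by rewrite e; have := pW Pproj.
  by rewrite memv_cap memv_ker Lp (negbTE u0) andbF.
- by rewrite -Lp; apply: memv_img; have := pW Pproj.
- move=> V' V'inv uV'; apply/subvP => x /memv_imgP[w Ww ->].
  rewrite LE /F; apply: memv_suml => s Hs; apply: memvZ.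
  exact: V'inv.
Qed.

Lemma mx_ext (M N : 'M[algC]_d) : (forall x : 'cV[algC]_d, M *m x = N *m x) -> M = N.
Proof.
move=> h; apply/matrixP => i j.
have := congr1 (fun c : 'cV[algC]_d => c i 0) (h (delta_mx j 0)).
by rewrite -!colE !mxE.
Qed.

Lemma ipC_mx (u w : 'cV[algC]_d) : ipC u w = ((map_mx (fun z : algC => z^*) w)^T *m u) 0 0.
Proof. by rewrite /ipC mxE; apply: eq_bigr => i _; rewrite !mxE mulrC. Qed.

Lemma d_gt0 : (0 < d)%N.
Proof. by case/mx_abs_irrP: (group_closure_closed_field rG_irr). Qed.

Lemma tight (v : 'cV[algC]_d) : v != 0 ->
  let a := #|G|%:R * ipC v v / d%:R in
  0 < a /\ forall x, \sum_(g in G) ipC x (rG g *m v) *: (rG g *m v) = a *: x.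
Proof.
move=> v0 a.
pose wg g := rG g *m v.
pose F : 'M[algC]_d := \sum_(g in G) wg g *m (map_mx (fun z : algC => z^*) (wg g))^T.
have Fx x : F *m x = \sum_(g in G) ipC x (wg g) *: wg g.
  rewrite /F mulmx_suml; apply: eq_bigr => g _.
  rewrite -mulmxA [_ *m x]mx11_scalar mul_mx_scalar ipC_mx.
  by [].
have cent : centgmx rG F.
  apply/centgmxP => h Gh; apply: mx_ext => x.
  rewrite -mulmxA Fx -mulmxA Fx mulmx_sumr.
  rewrite (sumKlM _ Gh); apply: eq_bigr => g Gg.
  rewrite ipC_rG // /wg mulmxA -repr_mxM ?groupV ?groupM // mulKg.
  by rewrite -scalemxAr mulmxA -repr_mxM.
have [c Fc] := is_scalar_mxP (mx_abs_irr_cent_scalar (group_closure_closed_field rG_irr) cent).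
have trF : \tr F = #|G|%:R * ipC v v.
  rewrite /F raddf_sum /= mulr_natl -sumr_const.
  apply: eq_bigr => g Gg; rewrite mxtrace_mulC /mxtrace big_ord1 -ipC_mx.
  by rewrite /wg rGu.
have ca : c = a.
  move: trF; rewrite Fc mxtrace_scalar /a => <-.
  by rewrite -[c *+ d]mulr_natr mulfK // pnatr_eq0 -lt0n d_gt0.
split.
  rewrite /a divr_gt0 ?ltr0n ?d_gt0 // mulr_gt0 ?ltr0n ?cardG_gt0 //.
  by rewrite lt_def ipC_neq0 // ipC_ge0.
by move=> x; rewrite -Fx Fc mul_scalar_mx ca.
Qed.

Lemma E_line v : E *m v = v -> v != 0 -> \dim U = 1%N ->
  forall x, E *m x = (ipC x v / ipC v v) *: v.
Proof.
move=> Ev v0 dU x.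
have vU : v \in U by rewrite memU Ev.
have Uv : U = <[v]>%VS.
  apply/eqP; rewrite eq_sym eqEdim -memvE vU dim_vline v0 dU //.
have : E *m x \in U by rewrite memU mulmxA E_idem.
rewrite Uv => /vlineP[k Ek]; rewrite Ek; congr (_ *: _).
have : ipC (E *m x) v = ipC x v by rewrite E_adj Ev.
by rewrite Ek ipCZl => <-; rewrite mulfK // ipC_neq0.
Qed.

Lemma trE_M v (M : 'M[algC]_d) : E *m v = v -> v != 0 -> \dim U = 1%N ->
  \tr (E *m M) = ipC (M *m v) v / ipC v v.
Proof.
move=> Ev v0 dU; rewrite mxtrace_mulC /mxtrace /ipC mulr_suml.
apply: eq_bigr => i _.
have -> : (M *m E) i i = (M *m (E *m delta_mx i (0 : 'I_1))) i 0.
  by rewrite mulmxA -colE [RHS]mxE.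
have ei : ipC (delta_mx i 0) v = (v i 0)^*.
  rewrite /ipC (bigD1 i) //= big1 ?addr0 => [|j ne]; last by rewrite mxE (negbTE ne) mul0r.
  by rewrite mxE eqxx mul1r.
by rewrite (E_line Ev v0 dU) -scalemxAr mxE ei mulrC mulrA.
Qed.

Lemma gram v : E *m v = v -> v != 0 -> \dim U = 1%N ->
  forall g1 g2, g1 \in G -> g2 \in G ->
  ipC (rG g2 *m v) (rG g1 *m v) =
  ipC v v * (#|G|%:R / d%:R) *
  op_entry (fun f => Pi_chi G (cfRepr rG) (Pi1' G H p f)) g1 g2.
Proof.
move=> Ev v0 dU g1 g2 G1 G2.
set chi := cfRepr rG.
set y := (g1^-1 * g2)%g.
have Gy : y \in G by rewrite groupM ?groupV.
pose e : L2 gT := ext0 H p.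
have S1 : \sum_(g in G) (chi g)^* * e (g2^-1 * (g^-1 * g1))%g =
          \sum_(h in G) (chi (g1 * h^-1 * g2^-1)%g)^* * e h.
  have inj : injective (fun h : gT => g1 * h^-1 * g2^-1)%g.
    by move=> a b /mulIg /mulgI /invg_inj.
  rewrite (reindex_inj inj) /=; apply: eq_big => [h|h Gh].
    by rewrite groupMr ?groupV // groupMl // groupV.
  congr (_ * e _).
  by rewrite !invMg !invgK !mulgA mulVg mul1g mulgKV.
have S2 : \sum_(h in G) (chi (g1 * h^-1 * g2^-1)%g)^* * e h =
          \sum_(h in H) \tr (rG h *m rG y) * p h.
  rewrite (big_setID H) /= (setIidPr HG) [X in _ + X]big1 ?addr0; last first.
    by move=> h /setDP[_ Hh]; rewrite ffunE (negbTE Hh) mulr0.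
  apply: eq_bigr => h Hh; rewrite ffunE Hh; congr (_ * _).
  rewrite -char_inv ?cfRepr_char // cfunE !invMg !invgK !groupM ?groupV ?(HGs Hh) //.
  rewrite mulr1n !repr_mxM ?groupM ?groupV ?(HGs Hh) //.
  by rewrite mxtrace_mulC -mulmxA.
have S3 : \sum_(h in H) \tr (rG h *m rG y) * p h = \tr (E *m rG y).
  rewrite /Emx mulmx_suml linear_sum; apply: eq_bigr => k Hk.
  by rewrite -scalemxAl linearZ /= mulrC.
rewrite /op_entry /Pi_chi /Pi1' [X in _ * X]ffunE convE.
under eq_bigr => g Gg do rewrite ffunE -/(lreg G g2 (ext0 H p)) lregE //.
rewrite S1 S2 S3 (trE_M _ Ev v0 dU) cfRepr1.
have dn0 : d%:R != 0 :> algC by rewrite pnatr_eq0 -lt0n d_gt0.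
have Gn0 : #|G|%:R != 0 :> algC by rewrite pnatr_eq0 -lt0n cardG_gt0.
rewrite scaleCE mulrA -[ipC v v * _ * _]mulrA mulrA.
have -> : #|G|%:R / d%:R * (d%:R / #|G|%:R) = 1 :> algC.
  by rewrite mulrA divfK // mulfV.
rewrite mulr1 mulrAC mulfV ?ipC_neq0 // mul1r.
rewrite /y repr_mxM ?groupV // -mulmxA [RHS](ipC_rG rGu) ?groupV //.
by rewrite [X in _ = ipC _ (rG X *m _)]invgK.
Qed.

Lemma coef_norm (V : {vspace 'cV[algC]_d}) (v : 'cV[algC]_d) s :
  (\dim V)%:R = (\dim W)%:R :> algC ->
  ipC v v * #|H|%:R / (\dim V)%:R * p s = ipC v v / p 1%g * p s.
Proof.
by move=> ->; rewrite -p1E invfM mulrA mulfK // pnatr_eq0 -lt0n cardG_gt0.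
Qed.

Lemma cond_iff :
  (\sum_(s in H) cfRepr rG s * (afforded_char H W s)^* = #|H|%:R) <->
  \dim U = 1%N.
Proof.
rewrite (chi_nu Winv Pproj _ HG).
have -> : \sum_(s in H) cfRepr rG s * p s = (\dim U)%:R.
  rewrite -trE_dim (trEmx rG HG); apply: eq_bigr => s _; exact: mulrC.
have Hn0 : #|H|%:R != 0 :> algC by rewrite pnatr_eq0 -lt0n cardG_gt0.
split => [e|->]; last by rewrite mulr1.
apply/eqP; rewrite -(eqr_nat algC) -(inj_eq (mulfI Hn0)) e mulr1 //.
Qed.

Lemma tight_frame_v v : v != 0 -> tight_frame G (fun g => rG g *m v).
Proof.
move=> v0; have [a_gt0 ha] := tight v0.
set a := _ / _ in a_gt0 ha.
have a0 : a != 0 by rewrite gt_eqF.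
split.
  move=> x; exists (fun g => a^-1 * ipC x (rG g *m v)).
  under eq_bigr => g _ do rewrite -scalerA.
  by rewrite -scaler_sumr ha scalerA mulVf // scale1r.
exists a; split => // x.
transitivity (ipC (\sum_(g in G) ipC x (rG g *m v) *: (rG g *m v)) x).
  rewrite ipC_suml; apply: eq_bigr => g _.
  by rewrite ipCZl normCK -ipCC.
by rewrite ha ipCZl.
Qed.

End Main.

Unset Implicit Arguments. Set Strict Implicit. Set Printing Implicit Defensive.


Theorem mainTheorem2 (gT : finGroupType) (G H : {group gT}) (d : nat)
  (rG : mx_representation algC G d)
  (rG_irr : mx_irreducible rG) (rG_unitary : unitary_repr rG)
  (HG : H \subset G) (nu : 'CF(H)) (nu_irr : nu \in irr H)
  (W : {vspace L2 gT}) (W_irr : lreg_irreducible H W)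
  (W_nu : forall s, s \in H -> afforded_char H W s = nu s)
  (Pi1 : L2 gT -> L2 gT) (Pi1_proj : is_orth_proj H W Pi1) :
  let chi := cfRepr rG in
  let p := Pi1 (delta 1%g) in
  let P (V : {vspace 'cV[algC]_d}) (v : 'cV[algC]_d) :=
    [/\ forall s w, s \in H -> w \in V -> rG s *m w \in V,
        (\dim V)%:R = nu 1%g, v != 0, v \in V &
        forall s, s \in H ->
          ipC v (rG s *m v) = ipC v v * #|H|%:R / (\dim V)%:R * p s] in
  ((exists V v, P V v /\
      forall V' v', P V' v' -> V' = V /\ exists c : algC, v' = c *: v)
   <-> \sum_(s in H) chi s * (nu s)^* = #|H|%:R)
  /\
  (\sum_(s in H) chi s * (nu s)^* = #|H|%:R ->
   forall V v, P V v ->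
     tight_frame G (fun g => rG g *m v) /\
     forall g1 g2, g1 \in G -> g2 \in G ->
       ipC (rG g2 *m v) (rG g1 *m v) =
       ipC v v * (#|G|%:R / d%:R) *
       op_entry (fun f => Pi_chi G chi (Pi1' G H p f)) g1 g2).
Proof.
move=> chi p P.
have nu1W : nu 1%g = (\dim W)%:R.
  by rewrite -W_nu // (nu1 H W).
set UU := U H rG Pi1.
have condE : (\sum_(s in H) chi s * (nu s)^* = #|H|%:R) <-> \dim UU = 1%N.
  rewrite (eq_bigr (fun s => chi s * (afforded_char H W s)^*)); last first.
    by move=> s Hs; rewrite W_nu.
  exact: (cond_iff rG HG W_irr Pi1_proj).
have mU x : (x \in UU) = (Emx H rG p *m x == x) by apply: (memU rG HG W_irr Pi1_proj).
have PE V v : P V v -> [/\ Emx H rG p *m v = v, v != 0, v \in V,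
    (\dim V = \dim W)%N & forall V' : {vspace 'cV[algC]_d},
        (forall s w, s \in H -> w \in V' -> rG s *m w \in V') ->
        v \in V' -> (V <= V')%VS].
  case=> Vinv dV v0 vV coef.
  have dV' : (\dim V)%:R = (\dim W)%:R :> algC by rewrite dV.
  split => //.
  - apply: (coef_fw rG_unitary HG W_irr Pi1_proj) => s Hs.
    by rewrite coef // (coef_norm W_irr Pi1_proj _ _ dV').
  - by apply/eqP; rewrite -(eqr_nat algC) dV'.
  - move=> V' V'inv vV'.
    have Ev : Emx H rG p *m v = v.
      apply: (coef_fw rG_unitary HG W_irr Pi1_proj) => s Hs.
      by rewrite coef // (coef_norm W_irr Pi1_proj _ _ dV').
    have [Vu [_ dVu uVu minVu]] := construct HG W_irr Pi1_proj Ev v0.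
    have dVn : \dim V = \dim W by apply/eqP; rewrite -(eqr_nat algC) dV'.
    have VuV : Vu = V.
      by apply/eqP; rewrite eqEdim (minVu V Vinv vV) dVn dVu leqnn.
    by rewrite -VuV; apply: minVu.
have mkP u : Emx H rG p *m u = u -> u != 0 ->
    exists2 Vu, P Vu u & forall V' : {vspace 'cV[algC]_d},
        (forall s w, s \in H -> w \in V' -> rG s *m w \in V') ->
        u \in V' -> (Vu <= V')%VS.
  move=> Eu u0.
  have [Vu [Vuinv dVu uVu minVu]] := construct HG W_irr Pi1_proj Eu u0.
  have dVu' : (\dim Vu)%:R = (\dim W)%:R :> algC by rewrite dVu.
  exists Vu => //; split => //; first by rewrite dVu nu1W.
  move=> s Hs; rewrite (coef_norm W_irr Pi1_proj u s dVu').
  exact: (coef_bw rG_unitary HG W_irr Pi1_proj Eu Hs).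
split.
  split.
    case=> V [v [PVv uniq]]; apply/condE.
    have [Ev v0 vV dV minV] := PE V v PVv.
    have vU : v \in UU by rewrite mU Ev.
    apply/eqP; rewrite eqn_leq; apply/andP; split; last first.
      rewrite lt0n dimv_eq0; apply/eqP => U0.
      by move: vU; rewrite U0 memv0 (negbTE v0).
    case: (boolP (UU <= <[v]>)%VS) => [sUv|nsUv].
      by have := dimvS sUv; rewrite dim_vline v0.
    case/subvPn: nsUv => u uU uNv.
    have u0 : u != 0 by apply: contraNneq uNv => ->; rewrite mem0v.
    have Eu : Emx H rG p *m u = u by apply/eqP; rewrite -mU.
    have [Vu PVu _] := mkP u Eu u0.
    have [_ [c uc]] := uniq Vu u PVu.
    by move: uNv; rewrite uc memvZ ?memv_line.
  move/condE => dU.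
  have U0 : UU != 0%VS by rewrite -dimv_eq0 dU.
  set v := vpick UU.
  have v0 : v != 0 by rewrite vpick0.
  have vU : v \in UU := memv_pick UU.
  have Ev : Emx H rG p *m v = v by apply/eqP; rewrite -mU.
  have [Vu PVu minVu] := mkP v Ev v0.
  have Uv : UU = <[v]>%VS.
    by apply/eqP; rewrite eq_sym eqEdim -memvE vU dim_vline v0 dU.
  exists Vu, v; split => // V' v' PV'.
  have [Ev' v'0 v'V' dV' minV'] := PE V' v' PV'.
  have : v' \in <[v]>%VS by rewrite -Uv mU Ev'.
  case/vlineP => c v'c.
  split; last by exists c.
  have [_ _ vVu dVu _] := PE Vu v PVu.
  case: PVu => Vuinv _ _ _ _.
  have v'Vu : v' \in Vu by rewrite v'c memvZ.
  by apply/eqP; rewrite eqEdim (minV' Vu Vuinv v'Vu) dV' dVu leqnn.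
move/condE => dU V v PVv.
have [Ev v0 vV dV _] := PE V v PVv.
split; first exact: (tight_frame_v rG_irr rG_unitary v0).
move=> g1 g2 G1 G2.
exact: (gram rG_irr rG_unitary HG W_irr Pi1_proj Ev v0 dU G1 G2).
Qed.
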